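(* Let $\{\rho_\theta\}_{\theta\in\Theta}$ be a differentiable family of density operators on a $d$-dimensional Hilbert space. For $\varepsilon\in(0,1)$ set $\rho_\theta^\varepsilon:=(1-\varepsilon)\rho_\theta+\varepsilon\, I/d$. Then $$I_F(\theta;\{\rho_\theta\}_\theta)=\lim_{\varepsilon\to 0}I_F(\theta;\{\rho^\varepsilon_\theta\}_\theta),$$ including the case where the left-hand side equals $+\infty$.
   Context: All Hilbert spaces are finite-dimensional; $\Theta\subseteq\mathbb{R}$ is the parameter set and $\partial_\theta$ denotes the derivative with respect to $\theta$. For a differentiable family $\{\rho_\theta\}_\theta$ of density operators with spectral decomposition $\rho_\theta=\sum_j\lambda^j_\theta|\psi^j_\theta\rangle\langle\psi^j_\theta|$ (including zero eigenvalues), let $\Pi^\perp_{\rho_\theta}$ be the projection onto the kernel of $\rho_\theta$. The SLD Fisher information is $I_F(\theta;\{\rho_\theta\}_\theta)=2\sum_{j,k:\lambda^j_\theta+\lambda^k_\theta>0}\frac{|\langle\psi^j_\theta|(\partial_\theta\rho_\theta)|\psi^k_\theta\rangle|^2}{\lambda^j_\theta+\lambda^k_\theta}$ if $\Pi^\perp_{\rho_\theta}(\partial_\theta\rho_\theta)\Pi^\perp_{\rho_\theta}=0$, and $+\infty$ otherwise. *)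

(* Defs.v *)
From HB Require Import structures.
From mathcomp Require Import all_boot all_order all_algebra.
From mathcomp Require Import spectral sesquilinear.
From mathcomp Require Import complex.
From mathcomp Require Import all_classical all_reals all_analysis.
Set Implicit Arguments. Unset Strict Implicit. Unset Printing Implicit Defensive.
Import Order.TTheory GRing.Theory Num.Theory.
Import numFieldNormedType.Exports.
Local Open Scope ring_scope.

Section QFI.
Variable R : realType.
Local Notation C := (R[i]).

Definition adjmx (m n : nat) (A : 'M[C]_(m, n)) : 'M[C]_(n, m) :=
  (map_mx (@Num.conj C) A)^T.

(** Density operator on C^d: Hermitian, positive semidefinite, trace one.
    (Vectors are row vectors v; <x|rho|x> for x = v^dagger is v rho v^dagger.) *)
Definition density_op (d : nat) (rho : 'M[C]_d) : Prop :=
  [/\ adjmx rho = rho,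
      (forall v : 'rV[C]_d, 0 <= (v *m rho *m adjmx v) 0 0) &
      \tr rho = 1].

Definition mx_derivable (d : nat) (rho : R -> 'M[C]_d) (t : R) : Prop :=
  forall i j : 'I_d,
    derivable (fun s : R => complex.Re (rho s i j)) t 1 /\
    derivable (fun s : R => complex.Im (rho s i j)) t 1.

Definition mx_derive (d : nat) (rho : R -> 'M[C]_d) (t : R) : 'M[C]_d :=
  \matrix_(i, j) Complex (derive1 (fun s : R => complex.Re (rho s i j)) t)
                         (derive1 (fun s : R => complex.Im (rho s i j)) t).

(** Spectral decomposition rho = sum_j lam_j |psi_j><psi_j| (zero eigenvalues
    included), taken from the library: rho = U^dagger diag(lam) U with U
    unitary, so that <psi_j| is the j-th row of U. *)
Definition eigU (d : nat) (rho : 'M[C]_d) : 'M[C]_d := spectralmx rho.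
Definition eigval (d : nat) (rho : 'M[C]_d) (j : 'I_d) : R :=
  complex.Re (spectral_diag rho 0 j).

Definition ker_proj (d : nat) (rho : 'M[C]_d) : 'M[C]_d :=
  adjmx (eigU rho) *m diag_mx (\row_j ((eigval rho j == 0)%:R : C)) *m eigU rho.

Definition SLD_fisher (d : nat) (rho drho : 'M[C]_d) : \bar R :=
  let M := eigU rho *m drho *m adjmx (eigU rho) in   (* M j k = <psi_j|drho|psi_k> *)
  if ker_proj rho *m drho *m ker_proj rho == 0 then
    (2 * \sum_(j < d) \sum_(k < d | 0 < eigval rho j + eigval rho k)
       (complex.Re `|M j k| ^+ 2 / (eigval rho j + eigval rho k)))%:E
  else +oo%E.

Definition fisher_info (d : nat) (rho : R -> 'M[C]_d) (theta : R) : \bar R :=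
  SLD_fisher (rho theta) (mx_derive rho theta).

Definition depolarize (d : nat) (eps : R) (rho : 'M[C]_d) : 'M[C]_d :=
  Complex (1 - eps) 0 *: rho + Complex (eps / d%:R) 0 *: 1%:M.

End QFI.

(* Main.v *)
Require Import Defs.
From HB Require Import structures.
From mathcomp Require Import all_boot all_order all_algebra.
From mathcomp Require Import spectral sesquilinear complex.
From mathcomp Require Import all_classical all_reals all_analysis.
From mathcomp Require Import ring lra.
From mathcomp Require Import unstable.
Import Order.TTheory GRing.Theory Num.Theory.
Import numFieldNormedType.Exports.
Local Open Scope ring_scope.
Local Open Scope sesquilinear_scope.
Set Implicit Arguments. Unset Strict Implicit.
Section S.
Variable R : realType.
Local Notation C := (R[i]).

Lemma adjmxE m n (A : 'M[C]_(m, n)) : adjmx A = A^t*.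
Proof. by rewrite /adjmx map_trmx. Qed.

Lemma adjmxK m n (A : 'M[C]_(m, n)) : adjmx (adjmx A) = A.
Proof. by rewrite !adjmxE trmxCK. Qed.

Lemma adjmxM m n p (A : 'M[C]_(m, n)) (B : 'M[C]_(n, p)) :
  adjmx (A *m B) = adjmx B *m adjmx A.
Proof. by rewrite /adjmx map_mxM trmx_mul. Qed.

Lemma adjmxD m n (A B : 'M[C]_(m, n)) : adjmx (A + B) = adjmx A + adjmx B.
Proof. by rewrite /adjmx map_mxD linearD. Qed.

Lemma adjmxZ m n a (A : 'M[C]_(m, n)) : adjmx (a *: A) = a^* *: adjmx A.
Proof. by apply/matrixP=> i j; rewrite !mxE rmorphM. Qed.

Lemma adjmx1 n : adjmx (1%:M : 'M[C]_n) = 1%:M.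
Proof. by rewrite /adjmx map_mx1 trmx1. Qed.

Lemma adjmx_diag n (s : 'rV[C]_n) : adjmx (diag_mx s) = diag_mx (map_mx Num.conj s).
Proof. by rewrite /adjmx map_diag_mx tr_diag_mx. Qed.

Lemma unitary_r n (V : 'M[C]_n) : V \is unitarymx -> V *m adjmx V = 1%:M.
Proof. by move=> /unitarymxP; rewrite adjmxE. Qed.

Lemma unitary_l n (V : 'M[C]_n) : V \is unitarymx -> adjmx V *m V = 1%:M.
Proof.
move=> Vu; rewrite adjmxE -invmx_unitary //; apply: mulVmx.
exact: unitarymx_unit.
Qed.

Lemma spec_herm n (A : 'M[C]_n) : adjmx A = A ->
  A = adjmx (eigU A) *m diag_mx (spectral_diag A) *m eigU A.
Proof.
move=> hA.
have An : A \is normalmx by apply/normalmxP; rewrite -adjmxE hA.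
have E := orthomx_spectralP An.
have Pu : spectralmx A \is unitarymx by apply: spectral_unitarymx.
rewrite /eigU adjmxE -(invmx_unitary Pu).
exact: E.
Qed.

Lemma conj_diag n (V A : 'M[C]_n) s : V \is unitarymx ->
  A = adjmx V *m diag_mx s *m V -> V *m A *m adjmx V = diag_mx s.
Proof.
move=> Vu ->.
by rewrite !mulmxA unitary_r // mul1mx -mulmxA unitary_r // mulmx1.
Qed.

Lemma diag_entry n (V A : 'M[C]_n) j :
  (V *m A *m adjmx V) j j = (row j V *m A *m adjmx (row j V)) 0 0.
Proof.
rewrite !mxE; apply: eq_bigr => k _; rewrite !mxE; congr (_ * _).
by apply: eq_bigr => l _; rewrite !mxE.
Qed.


Lemma diag_mx_jj n (s : 'rV[C]_n) j : diag_mx s j j = s 0 j.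
Proof. by rewrite mxE eqxx mulr1n. Qed.

Lemma psd_diag n (A V : 'M[C]_n) (s : 'rV[C]_n) :
  (forall v : 'rV[C]_n, 0 <= (v *m A *m adjmx v) 0 0) ->
  V \is unitarymx -> A = adjmx V *m diag_mx s *m V -> forall j, 0 <= s 0 j.
Proof.
move=> Hp Vu HA j; rewrite -diag_mx_jj -(conj_diag Vu HA) diag_entry; exact: Hp.
Qed.

Definition lyapN n (V D : 'M[C]_n) (s : 'rV[C]_n) : 'M[C]_n :=
  \matrix_(j, k) ((V *m D *m adjmx V) j k / (s 0 j + s 0 k)).
Definition lyapG n (V D : 'M[C]_n) (s : 'rV[C]_n) : 'M[C]_n :=
  adjmx V *m lyapN V D s *m V.

Lemma sandwich n (V P Q : 'M[C]_n) : V \is unitarymx ->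
  (adjmx V *m P *m V) *m (adjmx V *m Q *m V) = adjmx V *m (P *m Q) *m V.
Proof.
move=> Vu; rewrite -!mulmxA; congr (_ *m (_ *m _)).
by rewrite mulmxA unitary_r // mul1mx.
Qed.

Lemma sandwichK n (V D : 'M[C]_n) : V \is unitarymx ->
  adjmx V *m (V *m D *m adjmx V) *m V = D.
Proof.
by move=> Vu; rewrite !mulmxA unitary_l // mul1mx -mulmxA unitary_l // mulmx1.
Qed.

Lemma sandwichK' n (Z V : 'M[C]_n) : V \is unitarymx ->
  V *m (adjmx V *m Z *m V) *m adjmx V = Z.
Proof.
by move=> Vu; rewrite !mulmxA unitary_r // mul1mx -mulmxA unitary_r // mulmx1.
Qed.

Lemma lyap_sol_gen n (V D L : 'M[C]_n) (s : 'rV[C]_n) : V \is unitarymx ->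
  diag_mx s *m L + L *m diag_mx s = V *m D *m adjmx V ->
  (adjmx V *m diag_mx s *m V) *m (adjmx V *m L *m V) +
  (adjmx V *m L *m V) *m (adjmx V *m diag_mx s *m V) = D.
Proof.
move=> Vu HL; rewrite !sandwich // -mulmxDl -mulmxDr HL.
exact: sandwichK.
Qed.

Lemma lyapN_eq n (V D : 'M[C]_n) (s : 'rV[C]_n) : (forall j k, s 0 j + s 0 k != 0) ->
  diag_mx s *m lyapN V D s + lyapN V D s *m diag_mx s = V *m D *m adjmx V.
Proof.
move=> Hs; apply/matrixP => j k; rewrite mxE mul_diag_mx mul_mx_diag !mxE.
by rewrite [s 0 j * _]mulrC -mulrDr divfK.
Qed.

Lemma lyap_sol n (A V D : 'M[C]_n) (s : 'rV[C]_n) : V \is unitarymx ->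
  A = adjmx V *m diag_mx s *m V -> (forall j k, s 0 j + s 0 k != 0) ->
  A *m lyapG V D s + lyapG V D s *m A = D.
Proof.
move=> Vu HA Hs; rewrite /lyapG HA; apply: lyap_sol_gen => //.
exact: lyapN_eq.
Qed.

Lemma lyap_uniq n (A W X : 'M[C]_n) (w : 'rV[C]_n) : W \is unitarymx ->
  A = adjmx W *m diag_mx w *m W -> (forall j k, w 0 j + w 0 k != 0) ->
  A *m X + X *m A = 0 -> X = 0.
Proof.
move=> Wu HA Hw H.
set Y := W *m X *m adjmx W.
have EX : X = adjmx W *m Y *m W.
  by rewrite /Y sandwichK.
have HY : diag_mx w *m Y + Y *m diag_mx w = 0.
  move: H; rewrite HA EX !sandwich // -mulmxDl -mulmxDr => H.
  by rewrite -(sandwichK' (diag_mx w *m Y + Y *m diag_mx w) Wu) H mulmx0 mul0mx.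
have Y0 : Y = 0.
  apply/matrixP => j k; have /matrixP /(_ j k) := HY.
  rewrite mxE mul_diag_mx mul_mx_diag !mxE => /eqP.
  rewrite mulrC -mulrDr mulf_eq0 (negbTE (Hw _ _)) orbF => /eqP ->.
  by [].
by rewrite EX Y0 mulmx0 mul0mx.
Qed.

Lemma tr_sandwich n (V M N : 'M[C]_n) : V \is unitarymx ->
  \tr (adjmx (adjmx V *m M *m V) *m (adjmx V *m N *m V)) = \tr (adjmx M *m N).
Proof.
move=> Vu; rewrite !adjmxM adjmxK [adjmx V *m (adjmx M *m V)]mulmxA sandwich //.
by rewrite mxtrace_mulC (mulmxA V) unitary_r // mul1mx.
Qed.

Lemma lyap_tr n (V D : 'M[C]_n) (s : 'rV[C]_n) : V \is unitarymx ->
  \tr (adjmx D *m lyapG V D s) =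
  \sum_j \sum_k ((V *m D *m adjmx V) k j)^* * (V *m D *m adjmx V) k j
     / (s 0 k + s 0 j).
Proof.
move=> Vu; set M := V *m D *m adjmx V.
have ED : D = adjmx V *m M *m V by rewrite /M sandwichK.
rewrite {1}ED /lyapG tr_sandwich // /mxtrace.
apply: eq_bigr => j _; rewrite !mxE; apply: eq_bigr => k _.
by rewrite !mxE mulrA.
Qed.


Local Open Scope complex_scope.

Lemma sqnorm (z : C) : ((complex.Re `|z|) ^+ 2)%:C = z * z^*.
Proof.
rewrite normc_def /= sqr_sqrtr ?addr_ge0 ?sqr_ge0 // add_Re2_Im2 sqr_normc //.
Qed.

Definition Qf n (M : 'M[C]_n) (l : 'I_n -> R) : R :=
  \sum_j \sum_k (complex.Re `|M j k|) ^+ 2 / (l j + l k).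

Lemma Qf_C n (M : 'M[C]_n) (s : 'rV[C]_n) (l : 'I_n -> R) :
  (forall j, s 0 j = (l j)%:C) ->
  (Qf M l)%:C = \sum_j \sum_k (M k j)^* * M k j / (s 0 k + s 0 j).
Proof.
move=> Hs; rewrite /Qf rmorph_sum [RHS]exchange_big; apply: eq_bigr => j _.
rewrite rmorph_sum; apply: eq_bigr => k _.
rewrite fmorph_div rmorphD !Hs; congr (_ / _); by rewrite mulrC -sqnorm.
Qed.

Lemma sum_ne0 n (s : 'rV[C]_n) (l : 'I_n -> R) :
  (forall j, s 0 j = (l j)%:C) -> (forall j, 0 < l j) ->
  forall j k, s 0 j + s 0 k != 0.
Proof.
move=> Hs Hl j k; rewrite !Hs; apply/eqP => /(congr1 (@complex.Re R)) /= E.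
by have := addr_gt0 (Hl j) (Hl k); rewrite E ltxx.
Qed.

Lemma Qf_inv n (A D V W : 'M[C]_n) (s w : 'rV[C]_n) (l m : 'I_n -> R) :
  V \is unitarymx -> W \is unitarymx ->
  A = adjmx V *m diag_mx s *m V -> A = adjmx W *m diag_mx w *m W ->
  (forall j, s 0 j = (l j)%:C) -> (forall j, w 0 j = (m j)%:C) ->
  (forall j, 0 < l j) -> (forall j, 0 < m j) ->
  Qf (V *m D *m adjmx V) l = Qf (W *m D *m adjmx W) m.
Proof.
move=> Vu Wu HV HW Hs Hw Hl Hm; apply: (@complexI R).
rewrite (Qf_C _ Hs) (Qf_C _ Hw) -!lyap_tr //.
have Ns := sum_ne0 Hs Hl; have Nw := sum_ne0 Hw Hm.
have H1 := lyap_sol D Vu HV Ns; have H2 := lyap_sol D Wu HW Nw.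
suff -> : lyapG V D s = lyapG W D w by [].
apply/eqP; rewrite -subr_eq0; apply/eqP; apply: (lyap_uniq Vu HV Ns).
by rewrite mulmxBr mulmxBl addrACA -opprD H1 H2 subrr.
Qed.

Lemma fisher_posE n (A D : 'M[C]_n) :
  (forall j, 0 < eigval A j) ->
  SLD_fisher A D = (2 * Qf (eigU A *m D *m adjmx (eigU A)) (eigval A))%:E.
Proof.
move=> Hp; rewrite /SLD_fisher /=.
have -> : ker_proj A = 0.
  rewrite /ker_proj.
  have -> : \row_j ((eigval A j == 0)%:R : C) = 0.
    by apply/matrixP => i j; rewrite !mxE (gt_eqF (Hp j)).
  have -> : diag_mx (0 : 'rV[C]_n) = 0.
    by apply/matrixP => i j; rewrite !mxE mul0rn.
  by rewrite mulmx0 mul0mx.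
rewrite !mul0mx eqxx /Qf; congr ((2 * _)%:E).
apply: eq_bigr => j _; apply: eq_bigl => k; by rewrite addr_gt0.
Qed.


Lemma eig_entry n (A : 'M[C]_n) j : adjmx A = A ->
  spectral_diag A 0 j = (eigU A *m A *m adjmx (eigU A)) j j.
Proof.
move=> hA; rewrite (conj_diag (spectral_unitarymx A) (spec_herm hA)).
by rewrite diag_mx_jj.
Qed.

Lemma eig_shift n (A : 'M[C]_n) (c : R) j : adjmx A = A ->
  (forall v : 'rV[C]_n, 0 <= (v *m (A - (c%:C)%:M) *m adjmx v) 0 0) ->
  spectral_diag A 0 j = (eigval A j)%:C /\ c <= eigval A j.
Proof.
move=> hA Hp.
have Vu := spectral_unitarymx A.
have E : eigU A *m A *m adjmx (eigU A) =
    eigU A *m (A - (c%:C)%:M) *m adjmx (eigU A) + (c%:C)%:M.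
  by rewrite mulmxBr mulmxBl mul_mx_scalar -scalemxAl unitary_r // scalemx1 subrK.
have Hz := Hp (row j (eigU A)); rewrite -diag_entry in Hz.
rewrite /eigval eig_entry // E mxE [X in _ + X]mxE eqxx mulr1n.
move: Hz; case: (_ j j) => a b; rewrite lecE /= => /andP[/eqP -> Ha].
split; last by rewrite lerDr.
by apply/eqP; rewrite eq_complex /= addr0 !eqxx.
Qed.

Lemma depol_decomp n eps (A : 'M[C]_n) : adjmx A = A ->
  depolarize eps A = adjmx (eigU A) *m
    diag_mx (\row_j (Complex (1 - eps) 0 * spectral_diag A 0 j
                     + Complex (eps / n%:R) 0)) *m eigU A.
Proof.
move=> hA; set a := Complex (1 - eps) 0; set b := Complex (eps / n%:R) 0.
have Hd : diag_mx (\row_j (a * spectral_diag A 0 j + b))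
          = a *: diag_mx (spectral_diag A) + b%:M.
  apply/matrixP => i k; rewrite !mxE; case: eqP => [->|_]; rewrite ?mulr1n //.
  by rewrite !mulr0n mulr0 addr0.
have Vu := spectral_unitarymx A.
rewrite Hd mulmxDr mulmxDl -scalemxAr -scalemxAl -(spec_herm hA).
by rewrite mul_mx_scalar -scalemxAl unitary_l // scalemx1 /depolarize scalemx1.
Qed.

Lemma depol_herm n eps (A : 'M[C]_n) : adjmx A = A ->
  adjmx (depolarize eps A) = depolarize eps A.
Proof.
move=> hA; rewrite /depolarize adjmxD !adjmxZ adjmx1 hA.
by congr (_ *: _ + _ *: _); apply/eqP; rewrite eq_complex /= oppr0 !eqxx.
Qed.

Lemma depol_shift n eps (A : 'M[C]_n) (v : 'rV[C]_n) : eps <= 1 ->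
  (forall v : 'rV[C]_n, 0 <= (v *m A *m adjmx v) 0 0) ->
  0 <= (v *m (depolarize eps A - ((eps / n%:R)%:C)%:M) *m adjmx v) 0 0.
Proof.
move=> He Hp; rewrite /depolarize scalemx1 addrK -scalemxAr -scalemxAl mxE.
apply: mulr_ge0; last exact: Hp.
by rewrite lecE /= eqxx /= subr_ge0.
Qed.


Lemma ker_cond n (A D : 'M[C]_n) :
  (ker_proj A *m D *m ker_proj A == 0) <->
  (forall j k, eigval A j = 0 -> eigval A k = 0 ->
     (eigU A *m D *m adjmx (eigU A)) j k = 0).
Proof.
have Vu := spectral_unitarymx A.
set V := eigU A; set M := V *m D *m adjmx V.
set P := diag_mx (\row_j ((eigval A j == 0)%:R : C)).
have E : ker_proj A *m D *m ker_proj A = adjmx V *m (P *m M *m P) *m V.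
  rewrite /ker_proj -/V -/P -[D](sandwichK D Vu) -/M.
  by rewrite !sandwich.
rewrite E; split.
  move=> /eqP H j k Hj Hk.
  have : P *m M *m P = 0 by rewrite -(sandwichK' (P *m M *m P) Vu) H mulmx0 mul0mx.
  move/matrixP/(_ j k); rewrite mul_mx_diag mxE mul_diag_mx !mxE Hj Hk eqxx.
  by rewrite mulr1 mul1r.
move=> H; apply/eqP.
suff -> : P *m M *m P = 0 by rewrite mulmx0 mul0mx.
apply/matrixP => j k; rewrite mul_mx_diag mxE mul_diag_mx mxE.
case: (eqVneq (eigval A j) 0) => Hj; case: (eqVneq (eigval A k) 0) => Hk.
- by rewrite (H j k Hj Hk) mulr0 mul0r mxE.
- by rewrite [in X in _ * X]mxE (negbTE Hk) mulr0 mxE.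
- by rewrite [X in X * _ * _]mxE (negbTE Hj) mulr0n !mul0r mxE.
- by rewrite [X in X * _ * _]mxE (negbTE Hj) mulr0n !mul0r mxE.
Qed.

Lemma derive1_aff (f : R -> R) (a b t : R) : derivable f t 1 ->
  derive1 (fun s => a * f s + b) t = a * derive1 f t.
Proof.
move=> df; rewrite !derive1E.
have -> : (fun s => a * f s + b) = (a \*: f) + cst b by apply/funext.
rewrite deriveD; last 2 first.
- exact: derivableZ.
- exact: derivable_cst.
by rewrite deriveZ // derive_cst addr0.
Qed.

Lemma mx_derive_depol n eps (rho : R -> 'M[C]_n) t : mx_derivable rho t ->
  mx_derive (fun s => depolarize eps (rho s)) t
  = Complex (1 - eps) 0 *: mx_derive rho t.
Proof.
move=> Hd; apply/matrixP => i j; rewrite !mxE.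
have E1 : (fun s => complex.Re (depolarize eps (rho s) i j)) =
  (fun s => (1 - eps) * complex.Re (rho s i j) +
            eps / n%:R * complex.Re ((i == j)%:R : C)).
  apply/funext => s; rewrite /depolarize !mxE.
  case: (rho s i j) => x y; case: ((i == j)%:R : C) => u v /=; ring.
have E2 : (fun s => complex.Im (depolarize eps (rho s) i j)) =
  (fun s => (1 - eps) * complex.Im (rho s i j) +
            eps / n%:R * complex.Im ((i == j)%:R : C)).
  apply/funext => s; rewrite /depolarize !mxE.
  case: (rho s i j) => x y; case: ((i == j)%:R : C) => u v /=; ring.
rewrite E1 E2 !derive1_aff; [|exact: (Hd i j).2|exact: (Hd i j).1].
by apply/eqP; rewrite eq_complex /= mul0r subr0 mul0r addr0 !eqxx.
Qed.

Lemma sqnormRI (z : C) :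
  (complex.Re `|z|) ^+ 2 = complex.Re z ^+ 2 + complex.Im z ^+ 2.
Proof. by rewrite normc_def /= sqr_sqrtr ?addr_ge0 ?sqr_ge0. Qed.

Lemma Qf_scale n (M : 'M[C]_n) (a : R) (l : 'I_n -> R) :
  Qf (Complex a 0 *: M) l =
  \sum_j \sum_k a ^+ 2 * (complex.Re `|M j k|) ^+ 2 / (l j + l k).
Proof.
apply: eq_bigr => j _; apply: eq_bigr => k _; rewrite mxE !sqnormRI.
by case: (M j k) => x y /=; congr (_ / _); ring.
Qed.

Lemma psd_shift0 n (A : 'M[C]_n) :
  (forall v : 'rV[C]_n, 0 <= (v *m A *m adjmx v) 0 0) ->
  forall v : 'rV[C]_n, 0 <= (v *m (A - ((0:R)%:C)%:M) *m adjmx v) 0 0.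
Proof.
move=> Hp v.
have -> : ((0:R)%:C)%:M = 0 :> 'M[C]_n.
  by apply/matrixP => i k; rewrite !mxE; case: (i == k).
by rewrite subr0.
Qed.


Lemma fisher_eps n (rho D : 'M[C]_n) eps : adjmx rho = rho ->
  (forall v : 'rV[C]_n, 0 <= (v *m rho *m adjmx v) 0 0) ->
  0 < eps -> eps < 1 -> (0 < n)%N ->
  SLD_fisher (depolarize eps rho) (Complex (1 - eps) 0 *: D) =
  (2 * \sum_j \sum_k (1 - eps) ^+ 2 *
       (complex.Re `|(eigU rho *m D *m adjmx (eigU rho)) j k|) ^+ 2 /
       (((1 - eps) * eigval rho j + eps / n%:R) +
        ((1 - eps) * eigval rho k + eps / n%:R)))%:E.
Proof.
move=> hr Hp e0 e1 n0.
set A := depolarize eps rho.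
have hA : adjmx A = A := depol_herm eps hr.
have c0 : 0 < eps / n%:R by rewrite divr_gt0 // ltr0n.
have HA j := eig_shift j hA (fun v => depol_shift v (ltW e1) Hp).
have Apos j : 0 < eigval A j := lt_le_trans c0 (HA j).2.
have Hr j := eig_shift j hr (psd_shift0 Hp).
set mu := fun j => (1 - eps) * eigval rho j + eps / n%:R.
have mupos j : 0 < mu j.
  apply: (lt_le_trans c0); rewrite /mu lerDr; apply: mulr_ge0 (Hr j).2.
  by rewrite subr_ge0 ltW.
rewrite fisher_posE //; congr ((2 * _)%:E).
set w := \row_j (Complex (1 - eps) 0 * spectral_diag rho 0 j
                 + Complex (eps / n%:R) 0).
have Hw j : w 0 j = (mu j)%:C.
  rewrite mxE (Hr j).1; apply/eqP; rewrite eq_complex /= /mu.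
  by apply/andP; split; apply/eqP; ring.
rewrite (@Qf_inv n A (Complex (1 - eps) 0 *: D) (eigU A) (eigU rho)
  (spectral_diag A) w (eigval A) mu (spectral_unitarymx A) (spectral_unitarymx rho)
  (spec_herm hA) (depol_decomp eps hr) (fun j => (HA j).1) Hw Apos mupos).
by rewrite -scalemxAr -scalemxAl Qf_scale.
Qed.

End S.

Local Open Scope classical_set_scope.
Section L.
Variable R : realType.

Lemma term_cvg (a b c k : R) : a + b != 0 ->
  (1 - e) ^+ 2 * c / (((1 - e) * a + e / k) + ((1 - e) * b + e / k))
     @[e --> 0^'+] --> c / (a + b).
Proof.
move=> ab; apply: cvg_at_right_filter.
have h1 : (fun e : R => 1 - e) @ (0:R) --> (1 - 0 : R).
  by apply: cvgB; [exact: cvg_cst | exact: cvg_id].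
rewrite subr0 in h1.
have h0 : (fun e : R => e) @ (0:R) --> (0:R) by exact: cvg_id.
have hn : ((fun x => (1 - x)) \* (fun x => 1 - x) \* cst c) @ (0:R) --> 1 * 1 * c.
  by apply: cvgM; [apply: cvgM|exact: cvg_cst].
have hd : ((fun x => (1 - x)) \* cst a + (fun x => x) \* cst k^-1 +
    ((fun x => (1 - x)) \* cst b + (fun x => x) \* cst k^-1)) @ (0:R) -->
    (1 * a + 0 * k^-1 + (1 * b + 0 * k^-1)).
  by apply: cvgD; apply: cvgD; apply: cvgM => //; exact: cvg_cst.
rewrite !mul1r !mul0r !addr0 in hn hd.
have := cvgM hn (cvgV ab hd).
suff -> : (fun e : R => (1 - e) ^+ 2 * c / ((1 - e) * a + e / k + ((1 - e) * b + e / k)))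
  = ((fun x => (1 - x)) \* (fun x => 1 - x) \* cst c) \*
    ((fun x => (1 - x)) \* cst a + (fun x => x) \* cst k^-1 +
    ((fun x => (1 - x)) \* cst b + (fun x => x) \* cst k^-1))\^-1 by move=> H; exact: H.
by apply/funext => e /=; rewrite expr2.
Qed.


Lemma cvg_sumR (I : finType) (F : I -> R -> R) (L : I -> R) :
  (forall i, F i e @[e --> (0:R)^'+] --> L i) ->
  (\sum_i F i e) @[e --> (0:R)^'+] --> \sum_i L i.
Proof.
move=> H; apply: (@cvg_big _ _ +%R 0 xpredT add_continuous) => // i _.
Qed.

Lemma limit_fin n (lam : 'I_n -> R) (c : 'I_n -> 'I_n -> R) :
  (forall j, 0 <= lam j) -> (forall j k, lam j + lam k = 0 -> c j k = 0) ->
  (2 * \sum_j \sum_k (1 - e) ^+ 2 * c j k /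
      (((1 - e) * lam j + e / n%:R) + ((1 - e) * lam k + e / n%:R)))
    @[e --> (0:R)^'+] -->
  2 * \sum_j \sum_(k | 0 < lam j + lam k) c j k / (lam j + lam k).
Proof.
move=> Hl Hc.
have -> : \sum_j \sum_(k | 0 < lam j + lam k) c j k / (lam j + lam k) =
  \sum_j \sum_k (if 0 < lam j + lam k then c j k / (lam j + lam k) else 0).
  by apply: eq_bigr => j _; rewrite big_mkcond.
apply: cvgMl_tmp; apply: cvg_sumR => j; apply: cvg_sumR => k.
have hs : 0 <= lam j + lam k by rewrite addr_ge0.
case: ifPn => hp.
  by apply: term_cvg; rewrite gt_eqF.
have s0 : lam j + lam k = 0 by apply/eqP; rewrite eq_le hs andbT leNgt.
rewrite (Hc _ _ s0).
have -> : (fun e : R => (1 - e) ^+ 2 * 0 /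
      ((1 - e) * lam j + e / n%:R + ((1 - e) * lam k + e / n%:R))) = cst 0.
  by apply/funext => e; rewrite mulr0 mul0r.
exact: cvg_cst.
Qed.

Lemma sum_ge_term n (F : 'I_n -> 'I_n -> R) j0 k0 :
  (forall j k, 0 <= F j k) -> F j0 k0 <= \sum_j \sum_k F j k.
Proof.
move=> H; rewrite (bigD1 j0) //= (bigD1 k0) //= -addrA lerDl.
by apply: addr_ge0; apply: sumr_ge0 => i _ //; apply: sumr_ge0.
Qed.

Lemma limit_inf n (lam : 'I_n -> R) (c : 'I_n -> 'I_n -> R) j0 k0 :
  (0 < n)%N -> (forall j, 0 <= lam j) -> (forall j k, 0 <= c j k) ->
  lam j0 = 0 -> lam k0 = 0 -> 0 < c j0 k0 ->
  ((2 * \sum_j \sum_k (1 - e) ^+ 2 * c j k /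
      (((1 - e) * lam j + e / n%:R) + ((1 - e) * lam k + e / n%:R)))%:E)
    @[e --> (0:R)^'+] --> +oo%E.
Proof.
move=> n0 Hl Hc l0 k0' c0; apply/cvgeyPge => A.
have nR : 0 < (n%:R : R) by rewrite ltr0n.
set K := c j0 k0 * n%:R.
have K0 : 0 < K by rewrite mulr_gt0.
have d0 : 0 < K / (4 * (`|A| + 1)) by rewrite divr_gt0 // mulr_gt0 // ltr_pwDr.
near=> e.
have e0 : 0 < e by near: e; exact: nbhs_right_gt.
have e1 : e < 1/2 by near: e; apply: nbhs_right_lt; lra.
have e2 : e < K / (4 * (`|A| + 1)) by near: e; exact: nbhs_right_lt.
rewrite lee_fin.
have Hterm : forall j k, 0 <= (1 - e) ^+ 2 * c j k /
      (((1 - e) * lam j + e / n%:R) + ((1 - e) * lam k + e / n%:R)).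
  move=> j k; apply: divr_ge0; first by rewrite mulr_ge0 ?sqr_ge0.
  have en : 0 <= e / n%:R by rewrite divr_ge0 // ltW.
  have e1' : 0 <= 1 - e by lra.
  by apply: addr_ge0; apply: addr_ge0 => //; exact: mulr_ge0.
apply: le_trans (ler_wpM2l _ (sum_ge_term j0 k0 Hterm)); last by [].
rewrite l0 k0' !mulr0 !add0r.
have -> : 2 * ((1 - e) ^+ 2 * c j0 k0 / (e / n%:R + e / n%:R)) = (1 - e) ^+ 2 * K / e.
  rewrite /K; field; apply/andP; split; rewrite ?gt_eqF ?addr_gt0 //.
rewrite ler_pdivlMr //.
have h1 : 1/4 <= (1 - e) ^+ 2 by nra.
have h2 : K / 4 <= (1 - e) ^+ 2 * K by nra.
have h3 : 4 * (`|A| + 1) * e < K.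
  by rewrite mulrC -ltr_pdivlMr // mulr_gt0 // ltr_pwDr.
have h4 : A <= `|A| by exact: ler_norm.
have h5 : 0 <= `|A| by [].
nra.
Unshelve. all: by end_near.
Qed.

End L.

Unset Implicit Arguments.
Local Open Scope classical_set_scope.

Theorem mainTheorem1 (R : realType) (d : nat) (Theta : set R)
    (rho : R -> 'M[R[i]]_d) (theta : R) :
  open Theta ->
  (forall t, Theta t -> density_op (rho t)) ->
  (forall t, Theta t -> mx_derivable rho t) ->
  Theta theta ->
  fisher_info (fun t => depolarize eps (rho t)) theta @[eps --> 0^'+]
    --> fisher_info rho theta.
Proof.
move=> _ Hd Hder Ht.
have [hr Hp tr1] := Hd theta Ht.
have Hdr := Hder theta Ht.
have n0 : (0 < d)%N.
  rewrite lt0n; apply/eqP => d0; subst d; move: tr1.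
  by rewrite /mxtrace big_ord0 => /eqP; rewrite eq_sym oner_eq0.
set D := mx_derive rho theta.
set r := rho theta.
have Hlam j := eig_shift j hr (psd_shift0 Hp).
set lam := eigval r.
have Hl j : 0 <= lam j := (Hlam j).2.
set M := eigU r *m D *m adjmx (eigU r).
set c := fun j k => (complex.Re `|M j k|) ^+ 2.
have Hc j k : 0 <= c j k by rewrite /c sqr_ge0.
set fe := fun e : R => 2 * \sum_j \sum_k (1 - e) ^+ 2 * c j k /
      (((1 - e) * lam j + e / d%:R) + ((1 - e) * lam k + e / d%:R)).
apply: (@cvg_trans _ ((fun e => (fe e)%:E) @ (0:R)^'+)).
  apply: near_eq_cvg; near=> e.
  have e0 : 0 < e by near: e; exact: nbhs_right_gt.
  have e1 : e < 1 by near: e; apply: nbhs_right_lt; exact: ltr01.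
  by rewrite /fisher_info mx_derive_depol // fisher_eps.
case: (boolP (ker_proj r *m D *m ker_proj r == 0)) => K.
  have -> : fisher_info rho theta =
      (2 * \sum_j \sum_(k | 0 < lam j + lam k) c j k / (lam j + lam k))%:E.
    by rewrite /fisher_info /SLD_fisher /= -/D -/r K.
  apply: cvg_EFin; first by near=> e.
  apply: limit_fin => // j k s0.
  have lj : lam j = 0 by apply/eqP; rewrite eq_le Hl andbT -s0 lerDl.
  have lk : lam k = 0 by move: s0; rewrite lj add0r.
  by rewrite /c ((ker_cond r D).1 K j k lj lk) normr0 /= expr2 mul0r.
have -> : fisher_info rho theta = +oo%E.
  by rewrite /fisher_info /SLD_fisher /= -/D -/r (negbTE K).
have [j0 [k0 [lj [lk Mjk]]]] :
    exists j0 k0, lam j0 = 0 /\ lam k0 = 0 /\ M j0 k0 != 0.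
  case: (pselect (exists j0 k0, lam j0 = 0 /\ lam k0 = 0 /\ M j0 k0 != 0)) => [HH|Hn]; first exact: HH.
  exfalso; move/negP: K; apply; apply/(ker_cond r D).2 => j k lj lk.
  apply/eqP/negP => Mne; apply: Hn; exists j, k; split; [exact: lj|split; [exact: lk|exact/negP]].
have c0 : 0 < c j0 k0.
  rewrite /c sqnormRI; move: Mjk; case: (M j0 k0) => a b Hab /=.
  rewrite lt_def addr_ge0 ?sqr_ge0 // andbT paddr_eq0 ?sqr_ge0 // !sqrf_eq0.
  apply/negP => /andP[/eqP a0 /eqP b0]; move: Hab; rewrite a0 b0.
  by rewrite eq_complex /= !eqxx.
exact: (limit_inf n0 Hl Hc lj lk c0).
Unshelve. all: by end_near.
Qed.
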